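(* Let $I,J$ be positive integers, let $a_1,\ldots,a_J\in[0,\infty)^I$ be nonzero vectors, and consider the statistical model in which, for a parameter $\theta=(\theta_1,\ldots,\theta_I)\in(0,\infty)^I$, the observed counts $n_1,\ldots,n_J$ are independent with $n_j\sim\mathrm{Poisson}(\theta\cdot a_j)$, so that the joint probability mass function is $$f_\theta(n_1,\ldots,n_J)=\prod_{j=1}^J\frac{(\theta\cdot a_j)^{n_j}e^{-\theta\cdot a_j}}{n_j!}.$$ Then for any collapsing $\mathcal{C}=\{C_1,\ldots,C_K\}$ of the read types $s_1,\ldots,s_J$, the vector of collapsed counts $n_{\mathcal{C}}=(n_{C_1},\ldots,n_{C_K})$, where $n_{C_k}=\sum_{s_j\in C_k}n_j$, is a sufficient statistic for $\theta$.
   Context: Read type $s_j$ has sampling rate vector $a_j=(a_{1,j},\ldots,a_{I,j})$, and $\theta\cdot a_j=\sum_{i=1}^I\theta_i a_{i,j}$. A collapsing of $s_1,\ldots,s_J$ is a partition $\{C_1,\ldots,C_K\}$ of $\{s_1,\ldots,s_J\}$ into nonempty disjoint categories such that whenever $s_{j_1},s_{j_2}$ lie in the same category, $a_{j_1}=c\,a_{j_2}$ for some real $c>0$. *)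

(* Defs.v *)
From HB Require Import structures.
From mathcomp Require Import all_boot all_order all_algebra.
From mathcomp Require Import all_classical all_reals all_analysis.
Set Implicit Arguments. Unset Strict Implicit. Unset Printing Implicit Defensive.
Import Order.TTheory GRing.Theory Num.Theory.
Local Open Scope classical_set_scope.
Local Open Scope ring_scope.

Definition rate_dot (R : realType) (I : nat) (theta a : 'I_I -> R) : R :=
  \sum_(i < I) theta i * a i.

Definition poisson_joint_pmf (R : realType) (I J : nat) (a : 'I_J -> 'I_I -> R)
  (theta : 'I_I -> R) (n : {ffun 'I_J -> nat}) : R :=
  \prod_(j < J) ((rate_dot theta (a j)) ^+ n j * expR (- rate_dot theta (a j))
                  / (n j)`!%:R).

(* A collapsing of s_1..s_J into K categories, given by the labelling map
   c : 'I_J -> 'I_K (category C_k = c^-1(k)); categories nonempty and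
   rate vectors within a category positively proportional. *)
Definition is_collapsing (R : realType) (I J K : nat) (a : 'I_J -> 'I_I -> R)
  (c : 'I_J -> 'I_K) : Prop :=
  (forall k : 'I_K, exists j : 'I_J, c j = k) /\
  (forall j1 j2 : 'I_J, c j1 = c j2 ->
     exists cc : R, 0 < cc /\ forall i, a j1 i = cc * a j2 i).

Definition collapsed_counts (J K : nat) (c : 'I_J -> 'I_K)
  (n : {ffun 'I_J -> nat}) : {ffun 'I_K -> nat} :=
  [ffun k => (\sum_(j < J | c j == k) n j)%N].

(* Sufficiency for a discrete model on a countable sample space:
   P_theta(T = t) = sum_{x : T x = t} f_theta(x), and the conditional pmf
   P_theta(X = x | T = t) does not depend on theta (for all t of positive
   probability). *)
Definition prob_stat_eq (R : realType) (X Y : choiceType) (f : X -> R)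
  (T : X -> Y) (t : Y) : \bar R :=
  (\esum_(x in [set x | T x = t]) (f x)%:E)%E.

Definition cond_pmf_given (R : realType) (X Y : choiceType) (f : X -> R)
  (T : X -> Y) (x : X) (t : Y) : R :=
  if T x == t then f x / fine (prob_stat_eq f T t) else 0.

Definition sufficient_stat (R : realType) (Theta : Type) (inTheta : Theta -> Prop)
  (X Y : choiceType) (f : Theta -> X -> R) (T : X -> Y) : Prop :=
  forall th1 th2 : Theta, inTheta th1 -> inTheta th2 ->
  forall t : Y, (0 < prob_stat_eq (f th1) T t)%E -> (0 < prob_stat_eq (f th2) T t)%E ->
  forall x : X, cond_pmf_given (f th1) T x t = cond_pmf_given (f th2) T x t.

(* Main.v *)
Require Import Defs.
From HB Require Import structures.
From mathcomp Require Import all_boot all_order all_algebra.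
From mathcomp Require Import all_classical all_reals all_analysis.
From mathcomp Require Import ring.
Import Order.TTheory GRing.Theory Num.Theory.
Local Open Scope ring_scope.

Lemma esum_pZ (R : realType) (T : choiceType) (S : set T) (h : T -> R) (r : R) :
  0 < r -> (forall x, 0 <= h x) ->
  (\esum_(x in S) (r * h x)%:E = r%:E * \esum_(x in S) (h x)%:E)%E.
Proof.
move=> r0 h0.
have E : forall A : set T, (\sum_(x \in A) (r * h x)%:E = r%:E * \sum_(x \in A) (h x)%:E)%E.
  move=> A; rewrite ge0_mule_fsumr; last by move=> i; rewrite lee_fin.
  by apply: eq_fsbigr => x _; rewrite EFinM.
rewrite /esum -ereal_sup_pZl//; congr ereal_sup.
apply/seteqP; split=> y /=.
  move=> [A HA <-]; exists (\sum_(x \in A) (h x)%:E)%E; first by exists A.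
  by rewrite E.
move=> [z [A HA <-] <-]; exists A => //; by rewrite E.
Qed.

Theorem proposition2 (R : realType) (I J K : nat) (a : 'I_J -> 'I_I -> R)
  (c : 'I_J -> 'I_K) :
  (0 < I)%N -> (0 < J)%N ->
  (forall j i, 0 <= a j i) ->
  (forall j, exists i, a j i != 0) ->
  is_collapsing a c ->
  sufficient_stat (fun theta : 'I_I -> R => forall i, 0 < theta i)
    (poisson_joint_pmf a) (collapsed_counts c).
Proof.
move=> _ _ a0 _ [surj prop].
have [r Hr] := boolp.choice surj.
have : forall j, exists cc : R, 0 < cc /\ forall i, a j i = cc * a (r (c j)) i.
  by move=> j; apply: prop; rewrite Hr.
move=> /boolp.choice [cc Hcc].
pose h := fun n : {ffun 'I_J -> nat} => \prod_(j < J) (cc j ^+ n j / (n j)`!%:R).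
pose G := fun (th : 'I_I -> R) (t : {ffun 'I_K -> nat}) =>
  expR (- \sum_(j < J) rate_dot th (a j)) * \prod_(k < K) rate_dot th (a (r k)) ^+ t k.
have h0 : forall n, 0 <= h n.
  move=> n; apply: prodr_ge0 => j _; apply: divr_ge0; last exact: ler0n.
  by apply: exprn_ge0; apply: ltW; case: (Hcc j).
have rate_eq : forall th j, rate_dot th (a j) = cc j * rate_dot th (a (r (c j))).
  move=> th j; rewrite /rate_dot mulr_sumr; apply: eq_bigr => i _.
  by rewrite (proj2 (Hcc j) i) mulrCA.
have fact : forall th n, poisson_joint_pmf a th n = G th (collapsed_counts c n) * h n.
  move=> th n; rewrite /poisson_joint_pmf /G /h.
  have -> : \prod_(j < J) (rate_dot th (a j) ^+ n j * expR (- rate_dot th (a j)) / (n j)`!%:R)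
     = \prod_(j < J) (expR (- rate_dot th (a j)) * (rate_dot th (a (r (c j))) ^+ n j *
          (cc j ^+ n j / (n j)`!%:R))).
    apply: eq_bigr => j _; rewrite {1}rate_eq exprMn.
    by ring.
  rewrite !big_split /= -mulrA; congr (_ * _).
    by rewrite -expR_sum sumrN.
  congr (_ * _).
  rewrite (partition_big c xpredT) //=; apply: eq_bigr => k _.
  rewrite ffunE -prodrXr; apply: eq_bigr => j /eqP -> //.
have key : forall th, (forall i, 0 < th i) -> forall t,
  (0 < prob_stat_eq (poisson_joint_pmf a th) (collapsed_counts c) t)%E -> forall x,
  cond_pmf_given (poisson_joint_pmf a th) (collapsed_counts c) x t =
  if collapsed_counts c x == t then
    h x / fine (\esum_(n in [set n | collapsed_counts c n = t]) (h n)%:E)%E else 0.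
  move=> th thpos t pos x.
  have G0 : 0 <= G th t.
    apply: mulr_ge0; first exact/ltW/expR_gt0.
    apply: prodr_ge0 => k _; apply: exprn_ge0; rewrite /rate_dot.
    by apply: sumr_ge0 => i _; apply: mulr_ge0; [exact/ltW | exact: a0].
  have Pe : prob_stat_eq (poisson_joint_pmf a th) (collapsed_counts c) t =
      (\esum_(n in [set n | collapsed_counts c n = t]) (G th t * h n)%:E)%E.
    by rewrite /prob_stat_eq; apply: eq_esum => n /= Hn; rewrite fact Hn.
  have Gpos : 0 < G th t.
    rewrite lt_neqAle G0 andbT; apply/eqP => G00; move: pos.
    by rewrite Pe -G00 esum1 ?ltxx // => n _; rewrite mul0r.
  rewrite /cond_pmf_given; case: eqP => // Hx.
  rewrite Pe esum_pZ // fact Hx.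
  case: (\esum_(n in _) (h n)%:E)%E => [s| |] /=.
  - by rewrite invfM mulrACA mulfV ?mul1r // gt_eqF.
  - by rewrite gt0_muley ?lte_fin //= !invr0 !mulr0.
  - by rewrite gt0_muleNy ?lte_fin //= !invr0 !mulr0.
move=> th1 th2 P1 P2 t p1 p2 x.
by rewrite (key th1) // (key th2).
Qed.
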